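(* Let $\mathbb{K}$ be a field and $G$ a connected finite simple graph. Then $\mathcal{A}_G(\mathbb{K})$ is combinatorially formal: it is formal, and every arrangement whose intersection lattice is isomorphic to $L(\mathcal{A}_G(\mathbb{K}))$ is formal.
   Context: For a finite simple graph $G$ on $[n]$ and a field $\mathbb{K}$, $H_I:=\ker(\sum_{i\in I}x_i)\subseteq\mathbb{K}^n$ and $\mathcal{A}_G(\mathbb{K}):=\{H_I\mid \varnothing\neq I\subseteq[n],\ G[I]\text{ connected}\}$. An arrangement $\mathcal{A}$ with defining linear forms $\alpha_H$ ($H\in\mathcal{A}$) is formal if the space of linear relations $\{(c_H)\in\mathbb{K}^{\mathcal{A}}\mid\sum_H c_H\alpha_H=0\}$ is spanned by relations supported on sets $\mathcal{A}_X=\{H\in\mathcal{A}\mid X\subseteq H\}$ with $X$ an intersection of codimension $2$. $L(\mathcal{A})$ is the intersection lattice ordered by reverse inclusion. *)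

(* Defs.v *)
(* Central hyperplane arrangements over a field K,
   given by finite families of nonzero linear forms on K^m
   (a form is a column vector alpha : 'cV[K]_m, acting on row vectors v by
   v *m alpha; its hyperplane is the row space kermx alpha). *)
From HB Require Import structures.
From mathcomp Require Import all_boot all_order all_algebra.
Set Implicit Arguments. Unset Strict Implicit. Unset Printing Implicit Defensive.
Import GRing.Theory.
Local Open Scope ring_scope.

Section Arr.
Variables (K : fieldType) (m : nat) (I : finType) (alpha : I -> 'cV[K]_m).

Definition hyp (i : I) : 'M[K]_m := kermx (alpha i).

Definition is_arrangement : Prop :=
  (forall i, alpha i != 0) /\
  (forall i j, (hyp i == hyp j)%MS -> i = j).

(* the intersection of the hyperplanes indexed by S (canonical matrix
   representative <<_>> of the subspace, so equal subspaces are equal) *)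
Definition flat_of (S : {set I}) : 'M[K]_m :=
  <<(\bigcap_(i in S) hyp i)>>%MS.

Definition is_flat (X : 'M[K]_m) : Prop := exists S : {set I}, X = flat_of S.

Definition loc (X : 'M[K]_m) : {set I} := [set i | (X <= hyp i)%MS].

Definition is_relation (c : I -> K) : Prop := \sum_i c i *: alpha i = 0.

Definition supported_on (c : I -> K) (S : {set I}) : Prop :=
  forall i, i \notin S -> c i = 0.

(* formality: every relation is a sum (hence lies in the span) of relations
   each supported on A_X for some codimension-2 intersection X *)
Definition formal : Prop :=
  forall c : I -> K, is_relation c ->
    exists (k : nat) (cs : 'I_k -> I -> K) (Xs : 'I_k -> 'M[K]_m),
      (forall j, [/\ is_flat (Xs j), (\rank (Xs j) + 2 = m)%N,
                     is_relation (cs j) & supported_on (cs j) (loc (Xs j))]) /\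
      (forall i, c i = \sum_(j < k) cs j i).
End Arr.

(* L(A) ~= L(B) as posets (ordered by reverse inclusion; an order
   isomorphism for reverse inclusion is the same as one for inclusion) *)
Definition lattice_iso (K : fieldType) (m1 m2 : nat) (I1 I2 : finType)
    (a1 : I1 -> 'cV[K]_m1) (a2 : I2 -> 'cV[K]_m2) : Prop :=
  exists f : 'M[K]_m1 -> 'M[K]_m2,
    [/\ forall X, is_flat a1 X -> is_flat a2 (f X),
        forall X Y, is_flat a1 X -> is_flat a1 Y -> f X = f Y -> X = Y,
        forall Y, is_flat a2 Y -> exists2 X, is_flat a1 X & f X = Y
      & forall X Y, is_flat a1 X -> is_flat a1 Y ->
          (f X <= f Y)%MS = (X <= Y)%MS].

(* Graphs: a simple graph on [n] = 'I_n is a symmetric irreflexive rel. *)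
Definition induced_connected (n : nat) (e : rel 'I_n) (S : {set 'I_n}) : bool :=
  [forall x in S, forall y in S,
     connect (fun a b => [&& e a b, a \in S & b \in S]) x y].

Definition graph_connected (n : nat) (e : rel 'I_n) : Prop :=
  forall x y, connect e x y.

Definition conn_set (n : nat) (e : rel 'I_n) :=
  {S : {set 'I_n} | (S != set0) && induced_connected e S}.

Definition graph_form (K : fieldType) (n : nat) (e : rel 'I_n)
    (S : conn_set e) : 'cV[K]_n :=
  \col_(j < n) (if j \in val S then 1 else 0).
Arguments graph_form K {n} e S.

(* Main.v *)
Require Import Defs.
From mathcomp Require Import all_boot all_order all_algebra.
From mathcomp Require Import zify.
Set Implicit Arguments. Unset Strict Implicit. Unset Printing Implicit Defensive.
Import GRing.Theory.
Local Open Scope ring_scope.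

Section Lin.
Variables (K : fieldType) (m : nat) (J : finType) (beta : J -> 'cV[K]_m).
Implicit Types (S : {set J}).

Lemma sub_flat p (X : 'M[K]_(p, m)) S :
  (X <= flat_of beta S)%MS = [forall i in S, X <= hyp beta i]%MS.
Proof.
rewrite /flat_of genmxE; apply/sub_bigcapmxP/forall_inP => //.
Qed.

Lemma flat_hyp S i : i \in S -> (flat_of beta S <= hyp beta i)%MS.
Proof.
move=> iS; have := submx_refl (flat_of beta S).
by rewrite sub_flat => /forall_inP; apply.
Qed.

Lemma flat_canon X Y : is_flat beta X -> is_flat beta Y -> (X == Y)%MS -> X = Y.
Proof.
move=> [S ->] [T ->] h; rewrite /flat_of; apply/genmxP.
by move: h; rewrite !genmxE.
Qed.

Lemma flat_top p (X : 'M[K]_(p, m)) : (X <= flat_of beta set0)%MS.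
Proof. by rewrite sub_flat; apply/forall_inP => i; rewrite inE. Qed.

Lemma rank_col (b : 'cV[K]_m) : b != 0 -> \rank b = 1%N.
Proof.
move=> nz; have h1 := rank_leq_col b.
have : \rank b != 0%N by rewrite mxrank_eq0.
lia.
Qed.

Lemma rank_hyp i : beta i != 0 -> \rank (hyp beta i) = (m - 1)%N.
Proof. by move=> nz; rewrite /hyp mxrank_ker rank_col. Qed.

Lemma hyp_inj i k : is_arrangement beta ->
  (hyp beta i <= hyp beta k)%MS -> i = k.
Proof.
move=> [nz dist] h; apply: dist.
have [_ ] := mxrank_leqif_eq h; move=> <-.
by rewrite !rank_hyp.
Qed.

Lemma hyp_top i : beta i != 0 -> ~~ (flat_of beta set0 <= hyp beta i)%MS.
Proof.
move=> nz; apply/negP => h.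
have : (1%:M <= hyp beta i)%MS.
  by apply: submx_trans h; rewrite /flat_of genmxE; apply/sub_bigcapmxP => j; rewrite inE.
by rewrite /hyp sub_kermx mul1mx (negbTE nz).
Qed.

Lemma indep S : (forall w, w \in S -> ~~ (flat_of beta (S :\ w) <= hyp beta w)%MS) ->
  forall c, is_relation beta c -> supported_on c S -> forall j, c j = 0.
Proof.
move=> hS c rc sc j; apply/eqP/negPn/negP => cj.
have jS : j \in S by apply/negPn/negP => /sc /eqP; rewrite (negbTE cj).
apply: (negP (hS j jS)).
rewrite /hyp sub_kermx.
set Y := flat_of beta (S :\ j).
have : Y *m (\sum_i c i *: beta i) = 0 by rewrite rc mulmx0.
rewrite mulmx_sumr (bigD1 j) //= big1 ?addr0.
  by rewrite -scalemxAr => /eqP; rewrite scaler_eq0 (negbTE cj).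
move=> i ij; case: (boolP (i \in S)) => iS.
  have : (Y <= hyp beta i)%MS by apply: flat_hyp; rewrite !inE ij.
  by rewrite /hyp sub_kermx -scalemxAr => /eqP ->; rewrite scaler0.
by rewrite (sc i iS) scale0r mulmx0.
Qed.


Lemma ker_row (p n1 n2 : nat) (X : 'M[K]_(p, m)) (A : 'M[K]_(m, n1)) (B : 'M[K]_(m, n2)) :
  (X <= kermx (row_mx A B))%MS = (X <= kermx A)%MS && (X <= kermx B)%MS.
Proof. by rewrite !sub_kermx mul_mx_row row_mx_eq0. Qed.

Lemma rank2 j1 j2 j : is_arrangement beta -> j1 != j2 ->
  (flat_of beta [set j1; j2] <= hyp beta j)%MS ->
  (\rank (flat_of beta [set j1; j2]) + 2 = m)%N /\
  exists a b, beta j = a *: beta j1 + b *: beta j2.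
Proof.
move=> arr n12 hj; have [nz _] := arr.
set X := flat_of beta [set j1; j2].
set M := row_mx (beta j1) (beta j2).
have hXk : (X == kermx M)%MS.
  apply/andP; split.
    rewrite /M ker_row; apply/andP; split; apply: flat_hyp; by rewrite !inE eqxx ?orbT.
  rewrite sub_flat; apply/forall_inP => i; rewrite !inE => /orP[] /eqP ->;
  by have := submx_refl (kermx M); rewrite ker_row => /andP[].
have rM : \rank M = 2%N.
  have h2 := rank_leq_col M.
  rewrite -mxrank_tr /M tr_row_mx.
  have sub2 : ((beta j2)^T <= col_mx (beta j1)^T (beta j2)^T)%MS.
    by rewrite -addsmxE addsmxSr.
  have [le eqC] := mxrank_leqif_eq sub2.
  have : ~~ ((beta j2)^T == col_mx (beta j1)^T (beta j2)^T)%MS.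
    apply/negP => /andP[_]; rewrite col_mx_sub => /andP[/submxP[D hD] _].
    apply: (negP n12); apply/eqP; apply: esym; apply: hyp_inj => //.
    rewrite /hyp sub_kermx.
    have -> : beta j1 = beta j2 *m D^T by rewrite -[LHS]trmxK hD trmx_mul trmxK.
    by rewrite mulmxA mulmx_ker mul0mx.
  rewrite -eqC => hne.
  have := ltn_neqAle (\rank (beta j2)^T) (\rank (col_mx (beta j1)^T (beta j2)^T)).
  rewrite hne le mxrank_tr rank_col // => /= h1.
  move: h2; rewrite -mxrank_tr tr_row_mx; lia.
have rX : \rank X = (m - 2)%N.
  by rewrite (eqmxP hXk) mxrank_ker rM.
have h2m : (2 <= m)%N by rewrite -rM rank_leq_row.
split; first by rewrite rX; lia.
have kMc : (kermx M <= kermx (beta j))%MS.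
  by apply: submx_trans hj; move: hXk => /andP[].
set N := row_mx M (beta j).
have eqN : (kermx N == kermx M)%MS.
  apply/andP; split.
    by have := submx_refl (kermx N); rewrite ker_row => /andP[].
  by rewrite ker_row submx_refl kMc.
have rN : \rank N = \rank M.
  have := mxrank_ker N; rewrite (eqmxP eqN) mxrank_ker.
  have := rank_leq_row N; have := rank_leq_row M; lia.
have sT : (M^T <= N^T)%MS by rewrite /N tr_row_mx -addsmxE addsmxSl.
have [_ eqT] := mxrank_leqif_eq sT.
have : (M^T == N^T)%MS by rewrite -eqT !mxrank_tr rN.
move=> /andP[_]; rewrite /N tr_row_mx col_mx_sub => /andP[_ /submxP[D hD]].
rewrite /M tr_row_mx -[D]hsubmxK mul_row_col in hD.
rewrite [lsubmx D]mx11_scalar [rsubmx D]mx11_scalar !mul_scalar_mx in hD.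
exists (lsubmx D 0 0), (rsubmx D 0 0).
by rewrite -[beta j]trmxK hD linearD !linearZ /= !trmxK.
Qed.


Definition decomp (c : J -> K) :=
  exists (k : nat) (cs : 'I_k -> J -> K) (Xs : 'I_k -> 'M[K]_m),
      (forall j, [/\ is_flat beta (Xs j), (\rank (Xs j) + 2 = m)%N,
                     is_relation beta (cs j) & supported_on (cs j) (loc beta (Xs j))]) /\
      (forall i, c i = \sum_(j < k) cs j i).

Lemma decomp0 c : (forall i, c i = 0) -> decomp c.
Proof.
move=> h; exists 0%N, (fun _ _ => 0), (fun _ => 0); split; first by case.
by move=> i; rewrite big_ord0 h.
Qed.

Lemma decomp1 c X : is_flat beta X -> (\rank X + 2 = m)%N ->
  is_relation beta c -> supported_on c (loc beta X) -> decomp c.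
Proof.
move=> fX rX rc sc; exists 1%N, (fun _ => c), (fun _ => X); split => //.
by move=> i; rewrite big_ord1.
Qed.

Lemma decompD c1 c2 : decomp c1 -> decomp c2 -> decomp (fun i => c1 i + c2 i).
Proof.
move=> [k1 [cs1 [Xs1 [h1 e1]]]] [k2 [cs2 [Xs2 [h2 e2]]]].
exists (k1 + k2)%N, (fun j => match split j with inl a => cs1 a | inr b => cs2 b end),
  (fun j => match split j with inl a => Xs1 a | inr b => Xs2 b end); split.
  by move=> j; case: (split j).
move=> i; rewrite e1 e2 big_split_ord /=; congr (_ + _); apply: eq_bigr => j _.
  by rewrite (unsplitK (inl j : 'I_k1 + 'I_k2)).
by rewrite (unsplitK (inr j : 'I_k1 + 'I_k2)).
Qed.

Definition delta (j : J) (x : K) : J -> K := fun i => if i == j then x else 0.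

Lemma sum_delta j x : \sum_i delta j x i *: beta i = x *: beta j.
Proof.
rewrite (bigD1 j) //= big1 ?addr0 /delta ?eqxx // => i /negbTE ->.
by rewrite scale0r.
Qed.

Lemma sum_if_nat (j : J) (v : nat) : (\sum_(x : J) (if x == j then v else 0) = v)%N.
Proof. by rewrite (bigD1 j) //= eqxx big1 ?addn0 // => i /negbTE ->. Qed.

Lemma hl1 (a b c x : nat) : (a <= x -> a + 0 <= b + x + c)%N.
Proof. lia. Qed.

Lemma hl2 (a b c x : nat) : (a <= x -> a + 0 <= b + c + x)%N.
Proof. lia. Qed.

Lemma crit (Bas : {set J}) (mu : J -> nat) :
  (forall c, is_relation beta c -> supported_on c Bas -> forall j, c j = 0) ->
  (forall j, j \notin Bas -> exists j1 j2 a b X,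
     [/\ (mu j1 < mu j)%N, (mu j2 < mu j)%N, beta j = a *: beta j1 + b *: beta j2,
         is_flat beta X &
         [/\ (\rank X + 2 = m)%N, (X <= hyp beta j)%MS, (X <= hyp beta j1)%MS
           & (X <= hyp beta j2)%MS]]) ->
  formal beta.
Proof.
move=> C1 C2 c0 rc0.
pose W (c : J -> K) := (\sum_i (if (i \notin Bas) && (c i != 0%R) then 3 ^ mu i else 0))%N.
suff: forall N c, is_relation beta c -> (W c < N)%N -> decomp c by apply => //; apply: ltnSn.
elim=> [//|N IH] c rc WN.
case: (pickP (fun i => (i \notin Bas) && (c i != 0))); last first.
  move=> h; apply: decomp0; apply: C1 => // i iB.
  by have := h i; rewrite /= iB /= => /negbT; rewrite negbK => /eqP.
move=> j /andP[jB cj].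
have [j1 [j2 [a [b [X [m1 m2 ej fX [rX Xj Xj1 Xj2]]]]]]] := C2 j jB.
have n1 : j1 != j by apply/eqP => e; move: m1; rewrite e ltnn.
have n2 : j2 != j by apply/eqP => e; move: m2; rewrite e ltnn.
pose d i := delta j (c j) i + delta j1 (- (c j * a)) i + delta j2 (- (c j * b)) i.
pose c' i := c i - d i.
have rd : is_relation beta d.
  rewrite /is_relation /d.
  under eq_bigr do rewrite !scalerDl.
  rewrite !big_split /= !sum_delta ej scalerDr !scalerA.
  rewrite !scaleNr. have gen : forall (x y : 'cV[K]_m), x + y - x - y = 0 by move=> x y; rewrite (addrC x) addrK subrr. exact: gen.
have rc' : is_relation beta c'.
  rewrite /is_relation /c'.
  under eq_bigr do rewrite scalerBl.
  by rewrite sumrB rc rd subrr.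
have dd : decomp d.
  apply: (decomp1 fX rX rd) => i; rewrite inE => iX.
  have h1 : i != j by apply: contraNneq iX => ->.
  have h2 : i != j1 by apply: contraNneq iX => ->.
  have h3 : i != j2 by apply: contraNneq iX => ->.
  by rewrite /d /delta (negbTE h1) (negbTE h2) (negbTE h3) !addr0.
have dc' : decomp c'.
  apply: IH => //.
  have key : (W c' + 3 ^ mu j <= W c + 3 ^ mu j1 + 3 ^ mu j2)%N.
    rewrite -{1}(sum_if_nat j (3 ^ mu j)) -(sum_if_nat j1 (3 ^ mu j1))
            -(sum_if_nat j2 (3 ^ mu j2)) /W -!big_split /=.
    apply: leq_sum => i _.
    have cj' : c' j = 0.
      by rewrite /c' /d /delta eqxx eq_sym (negbTE n1) eq_sym (negbTE n2) !addr0 subrr.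
    case: (eqVneq i j) => [->|ij].
      have n1' : (j == j1) = false by rewrite eq_sym (negbTE n1).
      have n2' : (j == j2) = false by rewrite eq_sym (negbTE n2).
      by rewrite cj' n1' n2' !eqxx /= jB cj /= add0n !addn0.
    case: (eqVneq i j1) => [->|ij1].
      rewrite /=; apply: hl1; case: ifP => // _.
    case: (eqVneq i j2) => [->|ij2].
      rewrite /=; apply: hl2; case: ifP => // _.
    have -> : c' i = c i by rewrite /c' /d /delta (negbTE ij) (negbTE ij1) (negbTE ij2) !addr0 subr0.
    by rewrite /= !addn0.
  have e3 : (3 ^ mu j = 3 * 3 ^ (mu j).-1)%N.
    by rewrite -expnS prednK //; apply: leq_ltn_trans m1.
  have l1 : (3 ^ mu j1 <= 3 ^ (mu j).-1)%N by rewrite leq_pexp2l //; lia.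
  have l2 : (3 ^ mu j2 <= 3 ^ (mu j).-1)%N by rewrite leq_pexp2l //; lia.
  have p0 : (0 < 3 ^ (mu j).-1)%N by rewrite expn_gt0.
  move: WN; rewrite ltnS; lia.
have [k [cs [Xs [h e]]]] := decompD dc' dd.
exists k, cs, Xs; split => // i; rewrite -e /c' subrK //.
Qed.


Lemma flat1 i : (flat_of beta [set i] :=: hyp beta i)%MS.
Proof.
apply/eqmxP/andP; split; first by apply: flat_hyp; rewrite inE.
by rewrite sub_flat; apply/forall_inP => k; rewrite inE => /eqP ->.
Qed.

Lemma flatP S : is_flat beta (flat_of beta S).
Proof. by exists S. Qed.

End Lin.

#[local] Hint Resolve flatP : core.

Section Transport.
Variables (K : fieldType) (m1 m2 : nat) (I J : finType)
  (alpha : I -> 'cV[K]_m1) (beta : J -> 'cV[K]_m2).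

Lemma transport (Bas : {set I}) (mu : I -> nat) :
  is_arrangement alpha -> is_arrangement beta -> lattice_iso alpha beta ->
  (forall w, w \in Bas -> ~~ (flat_of alpha (Bas :\ w) <= hyp alpha w)%MS) ->
  (forall i, i \notin Bas -> exists i1 i2, [/\ i1 != i2, (mu i1 < mu i)%N,
      (mu i2 < mu i)%N & (flat_of alpha [set i1; i2] <= hyp alpha i)%MS]) ->
  formal beta.
Proof.
move=> arrA arrB [f [fF finj fsurj fle]] hBas hrest.
have [nzA _] := arrA; have [nzB _] := arrB.
have ftop : f (flat_of alpha set0) = flat_of beta set0.
  apply: flat_canon (fF _ (flatP _ _)) (flatP _ _) _.
  apply/andP; split; first exact: flat_top.
  have [Y fY <-] := fsurj _ (flatP beta set0).
  by rewrite fle // flat_top.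
have hE : forall i, exists j, f (flat_of alpha [set i]) = flat_of beta [set j].
  move=> i.
  have [T eT] := fF _ (flatP alpha [set i]).
  have [T0 | [j jT]] := set_0Vmem T.
    exfalso; move: eT; rewrite T0 -ftop => /finj; move=> /(_ (flatP _ _) (flatP _ _)) e.
    by apply: (negP (hyp_top (nzA i))); rewrite -e flat1.
  exists j.
  have [Y fY eY] := fsurj _ (flatP beta [set j]).
  have le1 : (flat_of alpha [set i] <= Y)%MS.
    rewrite -fle // eY eT flat1; exact: flat_hyp.
  have [S eS] := fY.
  have [S0 | [k kS]] := set_0Vmem S.
    exfalso; move: eY; rewrite eS S0 ftop => e.
    by apply: (negP (hyp_top (nzB j))); rewrite e flat1.
  have hik : (hyp alpha i <= hyp alpha k)%MS.
    rewrite -flat1; apply: submx_trans le1 _; rewrite eS; exact: flat_hyp.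
  have eik := hyp_inj arrA hik; subst k.
  have -> : flat_of alpha [set i] = Y.
    apply: flat_canon (flatP _ _) fY _; apply/andP; split => //.
    by rewrite eS flat1; apply: flat_hyp.
  by [].
have [g hg] := fin_all_exists hE.
have ginj : injective g.
  move=> i k e; apply: (hyp_inj arrA); rewrite -!flat1.
  have := finj _ _ (flatP _ _) (flatP _ _) (etrans (hg i) (etrans (congr1 (fun x => flat_of beta [set x]) e) (esym (hg k)))).
  by move=> ->.
have G1 : forall (S : {set I}) (T : {set J}), (forall i, i \in S -> g i \in T) ->
    (forall j, j \in T -> exists2 i, i \in S & g i = j) ->
    f (flat_of alpha S) = flat_of beta T.
  move=> S T h1 h2; apply: flat_canon (fF _ (flatP _ _)) (flatP _ _) _.
  apply/andP; split.
    rewrite sub_flat; apply/forall_inP => j /h2 [i iS <-].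
    rewrite -flat1 -hg fle //; rewrite flat1; exact: flat_hyp.
  have [Y fY eY] := fsurj _ (flatP beta T).
  rewrite -eY fle //.
  rewrite sub_flat; apply/forall_inP => i iS.
  rewrite -flat1 -fle // eY hg flat1; apply: flat_hyp; exact: h1.
have hsurj : forall j, exists i, g i = j.
  move=> j.
  have [Y fY eY] := fsurj _ (flatP beta [set j]).
  have [S eS] := fY.
  have e2 : f Y = flat_of beta (g @: S).
    rewrite eS; apply: G1 => [i iS | j' /imsetP [i iS ->]]; [exact: imset_f | by exists i].
  have [S0 | [k kS]] := set_0Vmem S.
    exfalso; move: e2; rewrite S0 imset0 eY => e.
    by apply: (negP (hyp_top (nzB j))); rewrite -e flat1.
  exists k; apply: esym; apply: (hyp_inj arrB).
  rewrite -flat1 -eY e2; apply: flat_hyp; exact: imset_f.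
have [h hh] := fin_all_exists hsurj.
have hg' : forall i, h (g i) = i by move=> i; apply: ginj; rewrite hh.
apply: (crit (Bas := g @: Bas) (mu := fun j => mu (h j))).
  apply: indep => _ /imsetP [w wB ->].
  have e : flat_of beta (g @: Bas :\ g w) = f (flat_of alpha (Bas :\ w)).
    apply: esym; apply: G1.
      move=> i; rewrite !inE => /andP [iw iB]; rewrite imset_f // andbT.
      by apply: contra iw => /eqP /ginj ->.
    move=> j; rewrite !inE => /andP [jw /imsetP [i iB ej]]; exists i => //.
    by rewrite !inE iB andbT; apply: contra jw => /eqP e; rewrite ej e.
  rewrite e -flat1 -hg fle // flat1; exact: hBas.
move=> j jB.
have iB : h j \notin Bas by apply: contra jB => hB; rewrite -(hh j) imset_f.
have [i1 [i2 [n12 l1 l2 sub]]] := hrest _ iB.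
have n12' : g i1 != g i2 by apply: contra n12 => /eqP /ginj ->.
have e : flat_of beta [set g i1; g i2] = f (flat_of alpha [set i1; i2]).
  apply: esym; apply: G1.
    by move=> i; rewrite !inE => /orP [] /eqP ->; rewrite eqxx ?orbT.
  move=> j'; rewrite !inE => /orP [] /eqP ->; [exists i1 | exists i2] => //;
  by rewrite !inE eqxx ?orbT.
have sub' : (flat_of beta [set g i1; g i2] <= hyp beta j)%MS.
  by rewrite e -flat1 -(hh j) -hg fle // flat1.
have [rX [a [b eb]]] := rank2 arrB n12' sub'.
exists (g i1), (g i2), a, b, (flat_of beta [set g i1; g i2]).
rewrite !hg'; split => //.
by split => //; apply: flat_hyp; rewrite !inE eqxx ?orbT.
Qed.

End Transport.

Section Graph.
Variables (K : fieldType) (n : nat) (e : rel 'I_n).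
Hypothesis esymm : symmetric e.

Let alpha := graph_form K e.

Lemma ev_mul (u : 'I_n) (v : 'cV[K]_n) : delta_mx 0 u *m v = (v u 0)%:M.
Proof. by rewrite -rowE [row u v]mx11_scalar mxE. Qed.

Lemma sc1_eq0 (a : K) : ((a%:M : 'M[K]_1) == 0) = (a == 0).
Proof.
apply/eqP/eqP => [/matrixP /(_ 0 0)|->]; first by rewrite !mxE.
by apply/matrixP => x y; rewrite !mxE mul0rn.
Qed.

Lemma ev_hyp u (S : conn_set e) :
  ((delta_mx 0 u : 'rV[K]_n) <= hyp alpha S)%MS = (u \notin val S).
Proof.
rewrite /hyp sub_kermx ev_mul sc1_eq0 /alpha /graph_form mxE.
by case: (u \in val S); rewrite ?oner_eq0 ?eqxx.
Qed.

Lemma graph_arr : is_arrangement alpha.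
Proof.
split.
  move=> i; case/andP: (valP i) => nz _.
  have [S0|[u uS]] := set_0Vmem (val i); first by move: nz; rewrite S0 eqxx.
  apply/eqP => /matrixP /(_ u 0); rewrite /alpha /graph_form !mxE /= uS.
  by move/eqP; rewrite oner_eq0.
move=> i j /andP [hij hji]; apply: val_inj; apply/setP => u.
apply/idP/idP => hu; apply/negPn/negP => hu'.
  by move: (submx_trans (eqbRL (ev_hyp u j) hu') hji); rewrite ev_hyp hu.
by move: (submx_trans (eqbRL (ev_hyp u i) hu') hij); rewrite ev_hyp hu.
Qed.

Definition gBas : {set conn_set e} := [set i : conn_set e | #|(val i : {set 'I_n})| == 1%N].

Lemma graph_bas w : w \in gBas ->
  ~~ (flat_of alpha (gBas :\ w) <= hyp alpha w)%MS.
Proof.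
rewrite inE => /cards1P [u hu].
apply/negP => h.
have : ((delta_mx 0 u : 'rV[K]_n) <= flat_of alpha (gBas :\ w))%MS.
  rewrite sub_flat; apply/forall_inP => x; rewrite !inE => /andP [xw /cards1P [u' hu']].
  rewrite ev_hyp hu' inE; apply: contra xw => /eqP eu; apply/eqP; apply: val_inj.
  by rewrite hu hu' eu.
move=> /(submx_trans) /(_ h); rewrite ev_hyp hu inE eqxx.
by [].
Qed.

Definition in_conn (S : {set 'I_n}) := (S != set0) && induced_connected e S.

Lemma split_conn (S : {set 'I_n}) : in_conn S -> (1 < #|S|)%N ->
  exists (C : {set 'I_n}) (u : 'I_n), [/\ u \notin C, S = u |: C & in_conn C].
Proof.
move=> /andP [nzS cS] cardS.
have [S0|[u0 u0S]] := set_0Vmem S; first by move: nzS; rewrite S0 eqxx.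
pose P (C : {set 'I_n}) := [&& C \proper S, C != set0 & induced_connected e C].
have P0 : P [set u0].
  apply/and3P; split.
  - rewrite properE sub1set u0S /=; apply/negP => /subset_leq_card; rewrite cards1; lia.
  - by apply/set0Pn; exists u0; rewrite inE.
  - apply/forall_inP => x; rewrite inE => /eqP ->; apply/forall_inP => y; rewrite inE => /eqP ->.
    exact: connect0.
case: (arg_maxnP (fun C : {set 'I_n} => #|C|) P0) => C /and3P [pCS nzC conC] maxC.
have sCS : C \subset S by move: pCS; rewrite properE => /andP [].
pose eS := fun a b => [&& e a b, a \in S & b \in S].
pose eC' (D : {set 'I_n}) := fun a b => [&& e a b, a \in D & b \in D].
have : [exists c in C, exists u in S :\: C, e c u].
  apply: contraT => /negP hno.
  have hno' : forall x y, x \in C -> y \in S -> y \notin C -> e x y -> False.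
    move=> x y xC yS yC exy; apply: hno; apply/exists_inP; exists x => //.
    by apply/exists_inP; exists y => //; rewrite inE yC yS.
  have cl : closed eS (mem C).
    move=> x y /and3P [exy xS yS] /=.
    case xC: (x \in C); case yC: (y \in C) => //.
      by exfalso; apply: (hno' x y) => //; rewrite yC.
    by exfalso; apply: (hno' y x) => //; [rewrite xC | rewrite esymm].
  have [C0|[c0 c0C]] := set_0Vmem C; first by move: nzC; rewrite C0 eqxx.
  move: pCS; rewrite properE => /andP [_ /subsetPn [d dS dC]].
  have := closed_connect cl.
  move: cS => /forall_inP /(_ c0 (subsetP sCS _ c0C)) /forall_inP /(_ d dS) hcon.
  by move=> /(_ _ _ hcon) /=; rewrite c0C (negbTE dC).
case/exists_inP => c cC /exists_inP [u]; rewrite inE => /andP [uC uS] ecu.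
have cU : induced_connected e (u |: C).
  have sub : forall x, x \in C -> connect (eC' (u |: C)) x c.
    move=> x xC.
    move: conC => /forall_inP /(_ x xC) /forall_inP /(_ c cC).
    apply: connect_sub => a b /and3P [eab aC bC]; apply: connect1.
    by rewrite /eC' !inE eab aC bC !orbT.
  have toc : forall x, x \in u |: C -> connect (eC' (u |: C)) x c.
    move=> x; rewrite !inE => /orP [/eqP -> | xC]; last exact: sub.
    by apply: connect1; rewrite /eC' !inE eqxx cC esymm ecu orbT.
  have symC : connect_sym (eC' (u |: C)).
    apply: sym_connect_sym => a b; rewrite /eC' (esymm a b); by case: (a \in u |: C); case: (b \in u |: C).
  apply/forall_inP => x xU; apply/forall_inP => y yU.
  apply: connect_trans (toc x xU) _; rewrite symC; exact: toc.
have sUS : u |: C \subset S by rewrite subUset sub1set uS sCS.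
case: (eqVneq (u |: C) S) => [eUS | neUS].
  exists C, u; split; [exact: uC | exact: (esym eUS) | by rewrite /in_conn nzC conC].
have : P (u |: C).
  apply/and3P; split => //.
  - by rewrite properEneq neUS sUS.
  - by apply/set0Pn; exists u; rewrite !inE eqxx.
move=> /maxC; rewrite cardsU1 uC /= add1n ltnn //.
Qed.


Lemma graph_rest (i : conn_set e) : i \notin gBas ->
  exists i1 i2 : conn_set e, [/\ i1 != i2, (#|(val i1 : {set 'I_n})| < #|(val i : {set 'I_n})|)%N,
      (#|(val i2 : {set 'I_n})| < #|(val i : {set 'I_n})|)%N
    & (flat_of alpha [set i1; i2] <= hyp alpha i)%MS].
Proof.
rewrite inE => n1.
have ci : in_conn (val i) := valP i.
have card : (1 < #|(val i : {set 'I_n})|)%N.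
  have : (0 < #|(val i : {set 'I_n})|)%N.
    by rewrite card_gt0; case/andP: ci.
  by move: n1; case: #|_| => [|[|k]].
have [C [u [uC eS cC]]] := split_conn ci card.
have cu : in_conn [set u].
  apply/andP; split; first by apply/set0Pn; exists u; rewrite inE.
  apply/forall_inP => x; rewrite inE => /eqP ->; apply/forall_inP => y; rewrite inE => /eqP ->.
  exact: connect0.
pose i1 : conn_set e := exist _ C cC.
pose i2 : conn_set e := exist _ [set u] cu.
exists i1, i2; split.
- apply/eqP => /(congr1 val) /= h; move: uC; rewrite h inE eqxx.
  by [].
- by rewrite eS cardsU1 uC.
- by rewrite eS cardsU1 uC cards1 /= ltnS card_gt0; case/andP: (cC).
have hsum : alpha i = alpha i1 + alpha i2.
  apply/matrixP => x y; rewrite /alpha /graph_form !mxE /= eS !inE.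
  case: (eqVneq x u) => [-> | _]; first by rewrite (negbTE uC) add0r.
  by rewrite /= addr0.
rewrite /hyp sub_kermx hsum mulmxDr.
have h1 : (flat_of alpha [set i1; i2] <= hyp alpha i1)%MS by apply: flat_hyp; rewrite !inE eqxx.
have h2 : (flat_of alpha [set i1; i2] <= hyp alpha i2)%MS by apply: flat_hyp; rewrite !inE eqxx orbT.
by move: h1 h2; rewrite /hyp !sub_kermx => /eqP -> /eqP ->; rewrite addr0.
Qed.

End Graph.

Theorem mainTheorem12 (K : fieldType) (n : nat) (e : rel 'I_n) :
  symmetric e -> irreflexive e -> graph_connected e ->
  formal (graph_form K e) /\
  (forall (m : nat) (J : finType) (beta : J -> 'cV[K]_m),
     is_arrangement beta -> lattice_iso (graph_form K e) beta ->
     formal beta).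
Proof.
move=> sym _ _.
have arrA : is_arrangement (graph_form K e) := graph_arr K e.
have T : forall (m : nat) (J : finType) (beta : J -> 'cV[K]_m),
     is_arrangement beta -> lattice_iso (graph_form K e) beta -> formal beta.
  move=> m J beta arrB iso.
  apply: (transport (Bas := gBas e)
           (mu := fun i : conn_set e => #|(val i : {set 'I_n})|) arrA arrB iso).
    exact: graph_bas.
  move=> i hi; case: (graph_rest K sym hi) => i1 [i2 h]; exists i1, i2; exact h.
split => //; apply: T => //.
exists (fun X => X); split => // Y fY; by exists Y.
Qed.
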